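(* Let $\Phi : M_m \to M_n$ be a transpose-preserving linear map. If $W^{1+i}_{\min}(C_\Phi) \ge 0$, then there exist matrices $A_1,\dots,A_k \in M_{n,m}$ and a linear map $\Psi: M_m\to M_n$ with $\Psi(X) = 0$ for every symmetric $X\in M_m$, such that \[ \Phi(X) = \sum_j A_j X A_j^T + \Psi(X) \quad\text{for all } X\in M_m; \] consequently $\Phi$ is positive.
   Context: $M_{n,m}$ denotes real $n\times m$ matrices, $M_n = M_{n,n}$, and $M_m\otimes M_n$ is identified with $M_{mn}$ via the Kronecker product. A linear map $\Phi: M_m\to M_n$ is transpose-preserving if $\Phi(X^T) = \Phi(X)^T$ for all $X$; it is positive if $\Phi(X)$ is positive semidefinite whenever $X$ is symmetric positive semidefinite. The Choi matrix is $C_\Phi = \sum_{i,j=1}^m E_{i,j}\otimes\Phi(E_{i,j})$, with $E_{i,j}$ the matrix units. For $A=\sum_j X_j\otimes Y_j\in M_m\otimes M_n$, the partial transpose is $A^\Gamma = \sum_j X_j\otimes Y_j^T$. The numerical range of $A\in M_N(\mathbb{C})$ is $W(A) = \{\mathbf{x}^*A\mathbf{x} : \mathbf{x}\in\mathbb{C}^N, \|\mathbf{x}\|=1\}$. For real $B$, $W^{1+i}(B) = \{c\in\mathbb{R} : c(1+i)\in W(B+iB^\Gamma)\}$, a nonempty compact interval with minimum $W^{1+i}_{\min}(B)$. *)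

(* Defs.v *)
From HB Require Import structures.
From mathcomp Require Import all_boot all_order all_algebra.
From mathcomp Require Import reals.
From mathcomp Require Import complex mxtens.

Set Implicit Arguments.
Unset Strict Implicit.
Unset Printing Implicit Defensive.

Import Order.TTheory GRing.Theory Num.Theory.
Local Open Scope ring_scope.

(* M_m (x) M_n is identified with 'M[R]_(m * n) via the Kronecker product
   [tensmx] of mathcomp-real-closed (row/column index (i,k) |-> i*n + k). *)

Definition E_unit (R : realType) (m : nat) (i j : 'I_m) : 'M[R]_m := delta_mx i j.

Definition transpose_preserving (R : realType) (m n : nat)
  (Phi : 'M[R]_m -> 'M[R]_n) : Prop :=
  forall X : 'M[R]_m, Phi X^T = (Phi X)^T.

Definition psd (R : realType) (n : nat) (X : 'M[R]_n) : Prop :=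
  X^T = X /\ forall v : 'cV[R]_n, 0 <= (v^T *m X *m v) ord0 ord0.

Definition positive_map (R : realType) (m n : nat)
  (Phi : 'M[R]_m -> 'M[R]_n) : Prop :=
  forall X : 'M[R]_m, psd X -> psd (Phi X).

Definition choi (R : realType) (m n : nat) (Phi : 'M[R]_m -> 'M[R]_n)
  : 'M[R]_(m * n) :=
  \sum_(i < m) \sum_(j < m) tensmx (E_unit R i j) (Phi (E_unit R i j)).

(* Partial transpose (on the second tensor factor):
   (sum_j X_j (x) Y_j)^Gamma = sum_j X_j (x) Y_j^T, i.e. entrywise
   A^Gamma_{(i,k),(j,l)} = A_{(i,l),(j,k)}. *)
Definition ptrans (R : realType) (m n : nat) (A : 'M[R]_(m * n)) : 'M[R]_(m * n) :=
  \matrix_(p, q)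
    A (mxtens_index ((mxtens_unindex p).1, (mxtens_unindex q).2))
      (mxtens_index ((mxtens_unindex q).1, (mxtens_unindex p).2)).

Definition adjC (R : realType) (p q : nat) (x : 'M[R[i]]_(p, q)) : 'M[R[i]]_(q, p) :=
  (map_mx (@conjc R) x)^T.

Definition cplx (R : realType) (p q : nat) (B : 'M[R]_(p, q)) : 'M[R[i]]_(p, q) :=
  map_mx (fun r : R => Complex r 0) B.

Definition numerical_range (R : realType) (N : nat) (A : 'M[R[i]]_N) : R[i] -> Prop :=
  fun z => exists x : 'cV[R[i]]_N,
      (adjC x *m x) ord0 ord0 = 1 /\ (adjC x *m A *m x) ord0 ord0 = z.

Definition W1i (R : realType) (m n : nat) (B : 'M[R]_(m * n)) : R -> Prop :=
  fun c => numerical_range (cplx B + (Complex 0 1) *: cplx (ptrans B))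
                           (Complex c 0 * Complex 1 1).

(* Main.v *)
Require Import Defs.
From HB Require Import structures.
From mathcomp Require Import all_boot all_order all_algebra.
From mathcomp Require Import reals.
From mathcomp Require Import complex mxtens.
From mathcomp Require Import ring lra.
Set Implicit Arguments. Unset Strict Implicit. Unset Printing Implicit Defensive.
Import Order.TTheory GRing.Theory Num.Theory.
Local Open Scope ring_scope.

Section Forms.
Variable R : realType.
Variable N : nat.
Implicit Types (B : 'M[R]_N) (u v w : 'cV[R]_N).

Definition bf B u v : R := \sum_(k < N) \sum_(j < N) u k 0 * B k j * v j 0.

Lemma bfE B u v : (u^T *m B *m v) 0 0 = bf B u v.
Proof.
rewrite /bf !mxE exchange_big /=; apply: eq_bigr => j _.
rewrite !mxE mulr_suml; apply: eq_bigr => k _; by rewrite !mxE.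
Qed.

Lemma bfDl B u v w : bf B (u + v) w = bf B u w + bf B v w.
Proof.
rewrite /bf -big_split /=; apply: eq_bigr => k _.
rewrite -big_split /=; apply: eq_bigr => j _; rewrite !mxE; ring.
Qed.
Lemma bfDr B u v w : bf B w (u + v) = bf B w u + bf B w v.
Proof.
rewrite /bf -big_split /=; apply: eq_bigr => k _.
rewrite -big_split /=; apply: eq_bigr => j _; rewrite !mxE; ring.
Qed.
Lemma bfZl B c u w : bf B (c *: u) w = c * bf B u w.
Proof.
rewrite /bf mulr_sumr; apply: eq_bigr => k _.
rewrite mulr_sumr; apply: eq_bigr => j _; rewrite !mxE; ring.
Qed.
Lemma bfZr B c u w : bf B w (c *: u) = c * bf B w u.
Proof.
rewrite /bf mulr_sumr; apply: eq_bigr => k _.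
rewrite mulr_sumr; apply: eq_bigr => j _; rewrite !mxE; ring.
Qed.
Lemma bfDm B B' u w : bf (B + B') u w = bf B u w + bf B' u w.
Proof.
rewrite /bf -big_split /=; apply: eq_bigr => k _.
rewrite -big_split /=; apply: eq_bigr => j _; rewrite !mxE; ring.
Qed.
Lemma bfNm B u w : bf (- B) u w = - bf B u w.
Proof.
rewrite /bf -sumrN; apply: eq_bigr => k _.
rewrite -sumrN; apply: eq_bigr => j _; rewrite !mxE; ring.
Qed.
Lemma bfBm B B' u w : bf (B - B') u w = bf B u w - bf B' u w.
Proof. by rewrite bfDm bfNm. Qed.
Lemma bfZm B c u w : bf (c *: B) u w = c * bf B u w.
Proof.
rewrite /bf mulr_sumr; apply: eq_bigr => k _.
rewrite mulr_sumr; apply: eq_bigr => j _; rewrite !mxE; ring.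
Qed.
Lemma bf_sym B u v : B^T = B -> bf B u v = bf B v u.
Proof.
move=> sB; rewrite /bf exchange_big /=; apply: eq_bigr => k _.
apply: eq_bigr => j _; rewrite -{1}sB mxE; ring.
Qed.

Definition ev (i : 'I_N) : 'cV[R]_N := delta_mx i 0.

Lemma sum_ev (i : 'I_N) (F : 'I_N -> R) : \sum_k ev i k 0 * F k = F i.
Proof.
rewrite (bigD1 i) //= big1 ?addr0; first by rewrite /ev mxE !eqxx mul1r.
by move=> k /negbTE; rewrite /ev mxE => ->; rewrite mul0r.
Qed.
Lemma sum_ev' (i : 'I_N) (F : 'I_N -> R) : \sum_k F k * ev i k 0 = F i.
Proof. by rewrite -[RHS](sum_ev i); apply: eq_bigr => k _; rewrite mulrC. Qed.

Lemma bf_ev B i j : bf B (ev i) (ev j) = B i j.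
Proof.
rewrite /bf (eq_bigr (fun k => ev i k 0 * \sum_j0 B k j0 * ev j j0 0)).
  by rewrite sum_ev sum_ev'.
by move=> k _; rewrite mulr_sumr; apply: eq_bigr => l _; rewrite mulrA.
Qed.

Definition nrm v : R := \sum_k v k 0 ^+ 2.

Lemma nrm_ge0 v : 0 <= nrm v.
Proof. by apply: sumr_ge0 => k _; apply: sqr_ge0. Qed.

Lemma nrm_eq0 B v : nrm v = 0 -> bf B v v = 0.
Proof.
move/eqP; rewrite psumr_eq0 => [/allP H|k _]; last by apply: sqr_ge0.
rewrite /bf big1 // => k _; have /(_ (mem_index_enum k)) := H k.
rewrite /= sqrf_eq0 => /eqP ->; by rewrite big1 // => j _; rewrite !mul0r.
Qed.

Lemma nrmZ c v : nrm (c *: v) = c ^+ 2 * nrm v.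
Proof. rewrite /nrm mulr_sumr; apply: eq_bigr => k _; rewrite mxE; ring. Qed.

End Forms.
Arguments ev {R N}.

Section S.
Variable R : realType.
Lemma term (ak bk h kk aj bj : R) : conjc (Complex ak bk) * (Complex h 0 + Complex 0 1 * Complex kk 0) * Complex aj bj = Complex (ak*h*aj + bk*kk*aj - ak*kk*bj + bk*h*bj) (ak*h*bj + bk*kk*bj + ak*kk*aj - bk*h*aj).
Proof. apply: (f_equal2 (@Complex R)); ring. Qed.
Lemma sumcE n (f g : 'I_n -> R) : \sum_(i < n) Complex (f i) (g i) = Complex (\sum_i f i) (\sum_i g i).
Proof.
elim: n f g => [|n IH] f g; first by rewrite !big_ord0.
by rewrite !big_ord_recr /= IH.
Qed.
End S.

Section S.
Variable R : realType.
Variable N : nat.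
Lemma nr_witness (H K : 'M[R]_N) (a b : 'cV[R]_N) :
  H^T = H -> K^T = K -> nrm a + nrm b = 1 ->
  numerical_range (cplx H + 'i *: cplx K)
     (Complex (bf H a a + bf H b b) (bf K a a + bf K b b)).
Proof.
move=> sH sK n1.
exists (\col_p Complex (a p 0) (b p 0)); split.
  rewrite mxE (eq_bigr (fun j => Complex (a j 0 ^+ 2 + b j 0 ^+ 2) 0)).
    rewrite sumcE [X in Complex _ X]big1 // big_split /=; exact: (f_equal2 _ n1 erefl).
  move=> j _; rewrite /adjC !mxE; apply: (f_equal2 (@Complex R)); ring.
rewrite mxE.
rewrite (eq_bigr (fun j => \sum_k Complex
   (a k 0 * H k j * a j 0 + b k 0 * K k j * a j 0 - a k 0 * K k j * b j 0 + b k 0 * H k j * b j 0)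
   (a k 0 * H k j * b j 0 + b k 0 * K k j * b j 0 + a k 0 * K k j * a j 0 - b k 0 * H k j * a j 0))).
  rewrite exchange_big /= (eq_bigr (fun k => Complex (\sum_j
   (a k 0 * H k j * a j 0 + b k 0 * K k j * a j 0 - a k 0 * K k j * b j 0 + b k 0 * H k j * b j 0))
   (\sum_j (a k 0 * H k j * b j 0 + b k 0 * K k j * b j 0 + a k 0 * K k j * a j 0 - b k 0 * H k j * a j 0)))); last by move=> k _; rewrite sumcE.
  rewrite sumcE; apply: (f_equal2 (@Complex R)).
    have -> : bf H a a + bf H b b = bf H a a + bf H b b + (bf K b a - bf K a b).
      by rewrite (bf_sym _ _ sK); ring.
    rewrite /bf -!sumrB -!big_split /=; apply: eq_bigr => k _.
    rewrite -!sumrB -!big_split /=; apply: eq_bigr => j _; ring.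
  have -> : bf K a a + bf K b b = bf K a a + bf K b b + (bf H a b - bf H b a).
    by rewrite (bf_sym _ _ sH); ring.
  rewrite /bf -!sumrB -!big_split /=; apply: eq_bigr => k _.
  rewrite -!sumrB -!big_split /=; apply: eq_bigr => j _; ring.
move=> j _; rewrite mxE mulr_suml; apply: eq_bigr => k _.
rewrite /adjC !mxE /= term; apply: (f_equal2 (@Complex R)); ring.
Qed.
End S.

Section S.
Variable R : realType.
Variables m n : nat.

Lemma ptransE (B : 'M[R]_(m * n)) i k i' l :
  ptrans B (mxtens_index (i, k)) (mxtens_index (i', l)) =
  B (mxtens_index (i, l)) (mxtens_index (i', k)).
Proof. by rewrite /ptrans mxE !mxtens_indexK. Qed.

Lemma ptrans_diag (B : 'M[R]_(m * n)) p : ptrans B p p = B p p.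
Proof. by rewrite /ptrans mxE -surjective_pairing mxtens_unindexK. Qed.

Lemma ptrans_sym (B : 'M[R]_(m * n)) : B^T = B -> (ptrans B)^T = ptrans B.
Proof.
move=> sB; apply/matrixP => p q; rewrite mxE.
case: (mxtens_indexP p) => i k; case: (mxtens_indexP q) => i' l.
by rewrite !ptransE -{1}sB mxE.
Qed.

Variable Phi : {linear 'M[R]_m -> 'M[R]_n}.

Lemma sum_delta2 (x y : 'I_m) (F : 'I_m -> 'I_m -> R) :
  \sum_(a < m) \sum_(b < m) ((x == a) && (y == b))%:R * F a b = F x y.
Proof.
rewrite (bigD1 x) //= [X in _ + X]big1 ?addr0; last first.
  move=> a /negbTE; rewrite eq_sym => ->; rewrite big1 // => b _; by rewrite mul0r.
rewrite (bigD1 y) //= [X in _ + X]big1 ?addr0; first by rewrite !eqxx mul1r.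
by move=> b /negbTE; rewrite eq_sym eqxx => ->; rewrite mul0r.
Qed.

Lemma choiE i k i' l :
  choi Phi (mxtens_index (i, k)) (mxtens_index (i', l)) = Phi (E_unit R i i') k l.
Proof.
rewrite /choi summxE -[RHS](sum_delta2 i i' (fun a b => Phi (E_unit R a b) k l)).
apply: eq_bigr => a _; rewrite summxE; apply: eq_bigr => b _.
by rewrite tensmxE /E_unit mxE.
Qed.

Hypothesis tpP : transpose_preserving Phi.

Lemma choi_sym : (choi Phi)^T = choi Phi.
Proof.
apply/matrixP => p q; rewrite mxE.
case: (mxtens_indexP p) => i k; case: (mxtens_indexP q) => i' l.
by rewrite !choiE /E_unit -trmx_delta tpP mxE.
Qed.

End S.

Section S.
Variable R : realType.
Variable N : nat.
Definition psdf (P : 'M[R]_N) := P^T = P /\ forall v, 0 <= bf P v v.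

Lemma psd_zero_diag P j i : psdf P -> P j j = 0 -> P i j = 0.
Proof.
move=> [sP hP] z; apply/eqP/negP => nz.
have bji : P j i = P i j by rewrite -{1}sP mxE.
set t := - (P i i + 1) / (2 * P i j).
have := hP (t *: ev j + ev i).
rewrite !bfDl !bfDr !bfZl !bfZr !bf_ev z bji.
have -> : t * P i j = - (P i i + 1) / 2.
  by rewrite /t; field; apply/negP.
rewrite mulr0 mulr0; lra.
Qed.

Lemma bf_outer (c u v : 'cV[R]_N) :
  bf (c *m c^T) u v = (\sum_k u k 0 * c k 0) * (\sum_j c j 0 * v j 0).
Proof.
rewrite /bf mulr_suml; apply: eq_bigr => k _; rewrite mulr_sumr.
apply: eq_bigr => j _; rewrite !mxE big_ord1 !mxE; ring.
Qed.

Lemma sum_col (P : 'M[R]_N) i (u : 'cV[R]_N) : P^T = P ->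
  \sum_k u k 0 * P k i = bf P u (ev i) /\ \sum_j P j i * u j 0 = bf P (ev i) u.
Proof.
move=> sP; split.
  rewrite /bf; apply: eq_bigr => k _.
  rewrite (eq_bigr (fun j => u k 0 * (P k j * ev i j 0))); last by move=> j _; rewrite mulrA.
  by rewrite -mulr_sumr sum_ev'.
rewrite /bf [RHS](eq_bigr (fun k => ev i k 0 * \sum_j P k j * u j 0)).
  rewrite sum_ev; apply: eq_bigr => j _; by rewrite -{1}sP mxE.
by move=> k _; rewrite mulr_sumr; apply: eq_bigr => l _; rewrite mulrA.
Qed.

Lemma psd_diag_ge0 P i : psdf P -> 0 <= P i i.
Proof. by move=> [_ hP]; rewrite -bf_ev. Qed.

Section Step.
Variables (P : 'M[R]_N) (i : 'I_N).
Hypothesis hP : psdf P.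
Hypothesis nz : P i i != 0.
Let p := P i i.
Let c : 'cV[R]_N := \col_k P k i.
Let Q := P - p^-1 *: (c *m c^T).

Lemma pP : 0 < p.
Proof. by rewrite lt_def nz psd_diag_ge0. Qed.

Lemma QE k j : Q k j = P k j - p^-1 * (P k i * P j i).
Proof. by rewrite /Q !mxE big_ord1 !mxE. Qed.

Lemma Q_psd : psdf Q.
Proof.
have [sP hp] := hP.
split.
  by rewrite /Q linearB linearZ /= trmx_mul trmxK sP.
move=> v; rewrite /Q bfBm bfZm bf_outer.
have [s1 s2] := sum_col i v sP.
rewrite (eq_bigr (fun k => v k 0 * P k i)); last by move=> k _; rewrite mxE.
rewrite [X in _ * (_ * X)](eq_bigr (fun j => P j i * v j 0)); last by move=> k _; rewrite mxE.
rewrite s1 s2 (bf_sym _ _ sP).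
set s := bf P v (ev i).
have := hp (v + (- s / p) *: ev i).
rewrite !bfDl !bfDr !bfZl !bfZr bf_ev (bf_sym (ev i) v sP) -/s -/p.
have pp := pP.
have -> : - s / p * (- s / p * p) = s * s / p by field; rewrite lt0r_neq0.
have -> : - s / p * s = - (s * s / p) by field; rewrite lt0r_neq0.
have -> : p^-1 * (s * s) = s * s / p by rewrite mulrC.
lra.
Qed.

Lemma Q_ii : Q i i = 0.
Proof. by rewrite QE -/p; field; rewrite lt0r_neq0 // pP. Qed.

Lemma Q_jj j : P j j = 0 -> Q j j = 0.
Proof.
move=> z; have [sP _] := hP.
have h : P i j = 0 := psd_zero_diag i hP z.
have hji : P j i = 0 by rewrite -{1}sP mxE.
by rewrite QE z hji mul0r mulr0 subr0.
Qed.

Lemma P_decomp : P = Q + ((Num.sqrt p)^-1 *: c) *m ((Num.sqrt p)^-1 *: c)^T.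
Proof.
rewrite linearZ /= -scalemxAl -scalemxAr scalerA -expr2 exprVn sqr_sqrtr; last exact: ltW pP.
by rewrite /Q subrK.
Qed.
End Step.

Lemma psd_factor_aux r : forall P, psdf P -> (#|[set j | P j j != 0%R]| <= r)%N ->
  exists k (w : 'I_k -> 'cV[R]_N), P = \sum_(j < k) w j *m (w j)^T.
Proof.
elim: r => [|r IH] P hP.
  rewrite leqn0 cards_eq0 => /eqP e; exists 0, (fun _ => 0); rewrite big_ord0.
  apply/matrixP => a b; rewrite mxE; apply: psd_zero_diag => //.
  have : b \notin [set j | P j j != 0] by rewrite e inE.
  by rewrite inE negbK => /eqP.
have [e0|] := eqVneq [set j | P j j != 0] set0.
  move=> _; apply: (IH P hP); by rewrite e0 cards0.
case/set0Pn => i; rewrite inE => nz cP.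
have [k [w ew]] : exists k (w : 'I_k -> 'cV[R]_N),
    (P - (P i i)^-1 *: ((\col_k P k i) *m (\col_k P k i)^T)) = \sum_(j < k) w j *m (w j)^T.
  apply: IH; first exact: Q_psd.
  have sub : [set j | (P - (P i i)^-1 *: ((\col_k P k i) *m (\col_k P k i)^T)) j j != 0]
      \subset [set j | P j j != 0] :\ i.
    apply/subsetP => j; rewrite !inE => hj; apply/andP; split.
      by apply: contraNneq hj => ->; apply/eqP; exact: Q_ii.
    by apply: contra hj => /eqP z; apply/eqP; exact: (Q_jj i hP z).
  have h1 := subset_leq_card sub.
  have h2 : #|[set j | P j j != 0]| = (#|[set j | P j j != 0] :\ i|).+1.
    by rewrite (cardsD1 i) inE nz.
  apply: (leq_trans h1); by rewrite -ltnS -h2.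
exists k.+1, (fun j => if unlift ord0 j is Some j' then w j' else
   (Num.sqrt (P i i))^-1 *: (\col_k P k i)).
rewrite big_ord_recl /=.
rewrite (eq_bigr (fun j => w j *m (w j)^T)); last by move=> j _; rewrite liftK.
rewrite unlift_none -ew {1}(P_decomp hP nz); by rewrite addrC.
Qed.

Lemma psd_factor P : psdf P ->
  exists k (w : 'I_k -> 'cV[R]_N), P = \sum_(j < k) w j *m (w j)^T.
Proof. move=> hP; exact: (psd_factor_aux hP (leqnn _)). Qed.
End S.

Section P.
Variable R : realType.
Variables m n : nat.
Variable Phi : {linear 'M[R]_m -> 'M[R]_n}.
Variable s : R.
Definition psi_fun (X : 'M[R]_m) : 'M[R]_n := s *: ((Phi X)^T - Phi X).
Lemma psi_lin : linear psi_fun.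
Proof.
move=> a X Y; rewrite /psi_fun !linearP /=.
apply/matrixP => i j; rewrite !mxE; ring.
Qed.
HB.instance Definition _ := GRing.isLinear.Build R 'M[R]_m 'M[R]_n *:%R psi_fun psi_lin.
Lemma test : exists Psi : {linear 'M[R]_m -> 'M[R]_n}, forall X, Psi X = psi_fun X.
Proof. by exists psi_fun. Qed.
End P.

From mathcomp Require Import boolp classical_sets.
Import Order.TTheory GRing.Theory Num.Theory.
Local Open Scope ring_scope.

Section S.
Variable R : realType.
Variables m n : nat.
Variable H : 'M[R]_(m * n).
Hypothesis sH : H^T = H.
Hypothesis hW : forall c : R, W1i H c -> 0 <= c.
Let K := ptrans H.
Let D := H - K.

Lemma key a b : nrm a + nrm b = 1 -> bf D a a + bf D b b = 0 ->
  0 <= bf H a a + bf H b b.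
Proof.
move=> n1 d0; apply: hW; rewrite /W1i.
have -> : Complex (bf H a a + bf H b b) 0 * Complex 1 1 =
          Complex (bf H a a + bf H b b) (bf K a a + bf K b b).
  apply: (f_equal2 (@Complex R)); first ring.
  move: d0; rewrite /D !bfBm => d0; lra.
apply: nr_witness => //; exact: ptrans_sym.
Qed.

Lemma zero_case w : bf D w w = 0 -> 0 <= bf H w w.
Proof.
move=> d0; have [/eqP n0|nz] := boolP (nrm w == 0).
  by rewrite (nrm_eq0 H n0).
have np : 0 < nrm w by rewrite lt_def nz nrm_ge0.
set c := (Num.sqrt (nrm w))^-1.
have c2 : c ^+ 2 = (nrm w)^-1 by rewrite /c exprVn sqr_sqrtr // ltW.
have := @key (c *: w) (0 *: w).
rewrite !nrmZ !bfZl !bfZr c2 d0.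
have h1 : (nrm w)^-1 * nrm w = 1 by rewrite mulVf.
have h2 : 0 < (nrm w)^-1 by rewrite invr_gt0.
move=> /(_ _ _); nra.
Qed.

Lemma nrm_pos (B : 'M[R]_(m * n)) (w : 'cV[R]_(m * n)) : bf B w w != 0 -> 0 < nrm w.
Proof.
move=> nz; rewrite lt_def nrm_ge0 andbT; apply/eqP => /(nrm_eq0 B).
by move/eqP: nz.
Qed.

Lemma mixed u v : 0 < bf D u u -> bf D v v < 0 ->
  - bf H u u / bf D u u <= - bf H v v / bf D v v.
Proof.
move=> du dv.
have nu := @nrm_pos D u (lt0r_neq0 du).
have nv := @nrm_pos D v (ltr0_neq0 dv).
set t := (- bf D v v * nrm u + bf D u u * nrm v)^-1.
have tp : 0 < t by rewrite invr_gt0; nra.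
have ht : t * (- bf D v v * nrm u + bf D u u * nrm v) = 1 by rewrite mulVf //; nra.
set al := Num.sqrt (- bf D v v * t).
set be := Num.sqrt (bf D u u * t).
have a2 : al ^+ 2 = - bf D v v * t by rewrite sqr_sqrtr //; nra.
have b2 : be ^+ 2 = bf D u u * t by rewrite sqr_sqrtr //; nra.
have hk := @key (al *: u) (be *: v).
rewrite !nrmZ !bfZl !bfZr a2 b2 !mulrA -!expr2 a2 b2 in hk.
have {}hk : 0 <= - bf D v v * t * bf H u u + bf D u u * t * bf H v v.
  by apply: hk; nra.
have hk' : 0 <= - bf D v v * bf H u u + bf D u u * bf H v v by nra.
have e : - bf H u u / bf D u u - - bf H v v / bf D v v =
  (- bf D v v * bf H u u + bf D u u * bf H v v) * ((bf D u u)^-1 * (bf D v v)^-1).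
  by field; apply/andP; split; [exact: ltr0_neq0 | exact: lt0r_neq0].
have : (- bf D v v * bf H u u + bf D u u * bf H v v) * ((bf D u u)^-1 * (bf D v v)^-1) <= 0.
  apply: mulr_ge0_le0 => //; apply: mulr_ge0_le0; rewrite ?invr_ge0 ?invr_le0; lra.
rewrite -e; lra.
Qed.
End S.

Section S.
Variable R : realType.
Variables m n : nat.
Variable H : 'M[R]_(m * n).
Hypothesis sH : H^T = H.
Hypothesis hW : forall c : R, W1i H c -> 0 <= c.
Let K := ptrans H.
Let D := H - K.

Lemma D_sym : D^T = D.
Proof. by rewrite /D linearB /= sH ptrans_sym. Qed.

Lemma D_diag p : D p p = 0.
Proof. by rewrite /D !mxE -surjective_pairing mxtens_unindexK subrr. Qed.

Lemma bf_pm (B : 'M[R]_(m * n)) i j : B^T = B ->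
  bf B (ev i + ev j) (ev i + ev j) = B i i + B j j + 2 * B i j /\
  bf B (ev i - ev j) (ev i - ev j) = B i i + B j j - 2 * B i j.
Proof.
move=> sB; have bji : B j i = B i j by rewrite -{1}sB mxE.
rewrite !bfDl !bfDr -!scaleN1r !bfZl !bfZr !bf_ev bji; split; ring.
Qed.

Lemma both_signs w : bf D w w != 0 ->
  (exists u, 0 < bf D u u) /\ (exists v, bf D v v < 0).
Proof.
move=> nz.
have [/existsP [i /existsP [j dij]]|] := boolP [exists i, exists j, D i j != 0]; last first.
  move=> nex; exfalso; move/eqP: nz; apply; rewrite /bf big1 // => k _.
  rewrite big1 // => l _.
  have -> : D k l = 0.
    apply/eqP; apply: (contraNT _ nex) => h; apply/existsP; exists k; apply/existsP; by exists l.
  by rewrite mulr0 mul0r.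
have [p1 p2] := bf_pm i j D_sym; rewrite !D_diag in p1 p2.
have [dp|dn] := ltrP 0 (D i j).
  by split; [exists (ev i + ev j) | exists (ev i - ev j)]; lra.
have dn' : D i j < 0 by rewrite lt_neqAle dij.
by split; [exists (ev i - ev j) | exists (ev i + ev j)]; lra.
Qed.

Lemma exists_s : exists s : R, forall w, 0 <= bf H w w + s * bf D w w.
Proof.
have [[w0 nz]|nex] := pselect (exists w, bf D w w != 0); last first.
  exists 0 => w; rewrite mul0r addr0; apply: zero_case => //.
  by apply/eqP; apply/negPn/negP => h; apply: nex; exists w.
have [[u0 du0] [v0 dv0]] := both_signs nz.
pose E := [set r : R | exists u, 0 < bf D u u /\ r = - bf H u u / bf D u u]%classic.
have ubE v : bf D v v < 0 -> ubound E (- bf H v v / bf D v v).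
  by move=> dv r [u [du ->]]; apply: mixed.
have E0 : (E !=set0)%classic by exists (- bf H u0 u0 / bf D u0 u0); exists u0.
have hE : has_ubound E by exists (- bf H v0 v0 / bf D v0 v0); apply: ubE.
exists (sup E) => w.
have [dp|dn|d0] := ltrgtP 0 (bf D w w).
- have : - bf H w w / bf D w w <= sup E.
    by apply: ub_le_sup => //; exists w.
  rewrite ler_pdivrMr // => h; lra.
- have : sup E <= - bf H w w / bf D w w by apply: ge_sup => //; apply: ubE.
  move=> h; have := ler_wnM2r (ltW dn) h.
  have -> : - bf H w w / bf D w w * bf D w w = - bf H w w.
    by field; rewrite ltr0_neq0.
  lra.
- by rewrite -d0 mulr0 addr0; apply: zero_case.
Qed.
End S.

Lemma dsum_comb (R : realType) m (f x y : 'I_m -> 'I_m -> R) (s : R) :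
  \sum_i \sum_j f i j * (x i j + s * (x i j - y i j)) =
  \sum_i \sum_j f i j * x i j + s * (\sum_i \sum_j f i j * x i j - \sum_i \sum_j f i j * y i j).
Proof.
rewrite -sumrB mulr_sumr -big_split /=; apply: eq_bigr => i _.
rewrite -sumrB mulr_sumr -big_split /=; apply: eq_bigr => j _; ring.
Qed.

Section Main.
Variable R : realType.
Variables m n : nat.
Variable Phi : {linear 'M[R]_m -> 'M[R]_n}.
Hypothesis tpP : transpose_preserving Phi.

Lemma PhiE X a b : Phi X a b = \sum_i \sum_j X i j * Phi (E_unit R i j) a b.
Proof.
rewrite {1}(matrix_sum_delta X) linear_sum summxE; apply: eq_bigr => i _.
rewrite linear_sum summxE; apply: eq_bigr => j _.
by rewrite linearZ mxE.
Qed.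

Lemma ThetaE k (w : 'I_k -> 'cV[R]_(m * n)) (X : 'M[R]_m) a b :
  let A j := \matrix_(k0 < n, i < m) w j (mxtens_index (i, k0)) 0 in
  (\sum_(j < k) A j *m X *m (A j)^T) a b =
  \sum_i \sum_i' X i i' * (\sum_(j < k) w j *m (w j)^T) (mxtens_index (i, a)) (mxtens_index (i', b)).
Proof.
move=> A; rewrite summxE.
under [RHS]eq_bigr => i _ do under eq_bigr => i' _ do rewrite summxE mulr_sumr.
under [RHS]eq_bigr => i _ do rewrite exchange_big /=.
rewrite exchange_big /=; apply: eq_bigr => j _.
rewrite mxE exchange_big /=; apply: eq_bigr => i' _.
rewrite !mxE mulr_suml; apply: eq_bigr => i _.
by rewrite !mxE big_ord1 !mxE; ring.
Qed.

End Main.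

Theorem theorem4p3 (R : realType) (m n : nat)
    (Phi : {linear 'M[R]_m -> 'M[R]_n}) :
  transpose_preserving Phi ->
  (forall c : R, W1i (choi Phi) c -> 0 <= c) ->
  (exists (k : nat) (A : 'I_k -> 'M[R]_(n, m))
          (Psi : {linear 'M[R]_m -> 'M[R]_n}),
      (forall X : 'M[R]_m, X^T = X -> Psi X = 0) /\
      (forall X : 'M[R]_m,
          Phi X = \sum_(j < k) (A j *m X *m (A j)^T) + Psi X))
  /\ positive_map Phi.
Proof.
move=> tpP hW.
have sH := choi_sym tpP.
have [s hs] := exists_s sH hW.
set H := choi Phi in sH hs hW.
set M := H + s *: (H - ptrans H).
have psdM : psdf M.
  split.
    by rewrite /M linearD linearZ /= sH (D_sym sH).
  by move=> v; rewrite /M bfDm bfZm.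
have [k [w ew]] := psd_factor psdM.
pose A j := \matrix_(k0 < n, i < m) w j (mxtens_index (i, k0)) 0.
have ME i a i' b : M (mxtens_index (i, a)) (mxtens_index (i', b)) =
   Phi (E_unit R i i') a b + s * (Phi (E_unit R i i') a b - Phi (E_unit R i i') b a).
  by rewrite /M !mxE !mxtens_indexK /= /H !choiE.
have dec : forall X, Phi X = \sum_(j < k) (A j *m X *m (A j)^T) + psi_fun Phi s X.
  move=> X; apply/matrixP => a b.
  rewrite mxE ThetaE -ew /psi_fun !mxE.
  under eq_bigr => i _ do under eq_bigr => i' _ do rewrite ME.
  rewrite dsum_comb !PhiE; ring.
have psi0 : forall X : 'M[R]_m, X^T = X -> psi_fun Phi s X = 0.
  by move=> X sX; rewrite /psi_fun -tpP sX subrr scaler0.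
split; first by exists k, A, (psi_fun Phi s).
move=> X [sX hX]; rewrite dec psi0 // addr0; split.
  rewrite linear_sum /=; apply: eq_bigr => j _.
  by rewrite !trmx_mul trmxK sX mulmxA.
move=> v; rewrite mulmx_sumr mulmx_suml summxE; apply: sumr_ge0 => j _.
have -> : v^T *m (A j *m X *m (A j)^T) *m v = ((A j)^T *m v)^T *m X *m ((A j)^T *m v).
  by rewrite trmx_mul trmxK !mulmxA.
exact: hX.
Qed.
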